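(* Let $m,n\ge 0$ be integers with $m-n\equiv 0\pmod 2$, put $N=m+n$, and let $1<r<\infty$. Then $$\left(\frac{2}{r+1}+\sum_{j=0}^{N-1}\frac{\binom{N}{j+1}^{r+1}-\binom{N}{j}^{r+1}}{(r+1)\left[\binom{N}{j+1}-\binom{N}{j}\right]}\right)^{1/r} \le 2^m\Big(\sum_{j=0}^{n}\binom{n}{j}^r\Big)^{1/r}.$$
   Context: Binomial coefficients have their usual meaning. *)

(* Defs.v *)
From mathcomp Require Import all_boot all_order all_algebra.
From mathcomp Require Import reals exp.

(* Main.v *)
Require Import Defs.
From mathcomp Require Import all_boot all_order all_algebra.
From mathcomp Require Import reals exp.
From mathcomp Require Import all_classical all_reals all_analysis.
From mathcomp Require Import ring lra.
Import Order.TTheory GRing.Theory Num.Theory.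
Import numFieldNormedType.Exports.
Local Open Scope classical_set_scope.
Local Open Scope ring_scope.

Lemma bern {R : realType} (r a : R) : 1 < r -> 0 <= a -> 1 + r * (a - 1) <= a `^ r.
Proof.
move=> r1 a0.
have r0 : 0 < r by apply: lt_trans r1.
have r10 : 0 < r - 1 by rewrite subr_gt0.
have pq : r^-1 + (r / (r - 1))^-1 = 1.
  rewrite invf_div; field; by rewrite gt_eqF.
have := @conjugate_powR R a 1 r (r / (r - 1)) a0 ler01 r0 (divr_gt0 r0 r10) pq.
rewrite mulr1 powR1 mul1r invf_div => H.
have : r * a <= r * (a `^ r / r + (r - 1) / r) by rewrite ler_pM2l.
rewrite mulrDr !(mulrC r) !divfK ?gt_eqF //.
move=> H2; lra.
Qed.

Lemma tang (R : realType) (r x b : R) : 1 < r -> 0 < x -> 0 <= b ->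
  x `^ r + r * x `^ (r - 1) * (b - x) <= b `^ r.
Proof.
move=> r1 x0 b0.
have := @bern R r (b / x) r1 (divr_ge0 b0 (ltW x0)).
have xr0 : 0 < x `^ r by rewrite powR_gt0.
move=> H.
have := ler_wpM2r (ltW xr0) H.
rewrite -powRM ?divr_ge0 ?(ltW x0) // divfK ?gt_eqF //.
have -> : x `^ (r - 1) = x `^ r / x.
  by rewrite powRB ?powRr1 ?ltW // gt_eqF // implybT.
move=> H2; apply: le_trans H2.
rewrite mulrDl mul1r lerD2l.
by rewrite le_eqVlt; apply/orP; left; apply/eqP; field; rewrite gt_eqF.
Qed.

Lemma hh (R : realType) (r a b : R) : 1 < r -> 0 < b -> b <= a ->
  2 * (a `^ (r + 1) - b `^ (r + 1)) <= (r + 1) * (a - b) * (a `^ r + b `^ r).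
Proof.
move=> r1 b0 ba.
pose F : R -> R := (cst (r + 1) * (id - cst b)) * (@powR R ^~ r + cst (b `^ r))
   - cst 2 * (@powR R ^~ (r + 1) - cst (b `^ (r + 1))).
pose dF (x : R) := (r + 1) * (r * x `^ (r - 1) * (x - b) - x `^ r + b `^ r).
have D : forall x : R, 0 < x -> is_derive x (1:R) F (dF x).
  move=> x x0; rewrite /F; apply: is_derive_eq.
    have P1 := is_derive1_powR r x0.
    have P2 := is_derive1_powR (r + 1) x0.
    apply: is_deriveB; apply: is_deriveM; try exact: _.
  rewrite /dF /= addrK; rewrite /GRing.scale /=.
  rewrite !fctE; ring.
have cF : {within `[b, a], continuous F}.
  apply: continuous_in_subspaceT => x; rewrite inE /= in_itv /= => /andP[bx _].
  have x0 : 0 < x by apply: lt_le_trans bx.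
  apply: differentiable_continuous; apply/derivable1_diffP.
  by case: (D x x0).
have DD : forall x, x \in `]b, a[ -> is_derive x 1 F (dF x).
  move=> x; rewrite in_itv /= => /andP[bx _]; apply: D; exact: lt_trans bx.
have [c] := MVT_segment ba DD cF.
rewrite in_itv /= => /andP[bc _].
have c0 : 0 < c by apply: lt_le_trans bc.
have := @tang R r c b r1 c0 (ltW b0).
rewrite /F /dF !fctE => T E.
rewrite !subrr !mulr0 !mul0r subrr subr0 in E.
have : 0 <= (r + 1) * (r * c `^ (r - 1) * (c - b) - c `^ r + b `^ r) * (a - b).
  rewrite mulr_ge0 // ?subr_ge0 // mulr_ge0 //; first lra.
  have : c `^ r + r * c `^ (r - 1) * (b - c) <= b `^ r by [].
  have -> : r * c `^ (r - 1) * (b - c) = - (r * c `^ (r - 1) * (c - b)) by ring.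
  lra.
rewrite -E; lra.
Qed.

Definition Tm {R : realType} (r x y : R) :=
  (x `^ (r + 1) - y `^ (r + 1)) / ((r + 1) * (x - y)).

Lemma Tm_sym {R : realType} (r x y : R) : Tm r x y = Tm r y x.
Proof.
rewrite /Tm -[y - x]opprB -[y `^ _ - _]opprB mulrN invrN mulrNN.
by [].
Qed.

Lemma Tm_lt {R : realType} (r x y : R) : 1 < r -> 0 < y -> y < x ->
  0 <= Tm r x y /\ Tm r x y <= (x `^ r + y `^ r) / 2.
Proof.
move=> r1 y0 yx.
have den : 0 < (r + 1) * (x - y) by rewrite mulr_gt0 // ?subr_gt0 //; lra.
split.
  rewrite /Tm divr_ge0 ?(ltW den) // subr_ge0 ge0_ler_powR ?nnegrE ?ltW //.
    lra.
  exact: lt_trans yx.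
rewrite /Tm ler_pdivrMr // .
have := @hh R r x y r1 y0 (ltW yx).
move=> H.
have -> : (x `^ r + y `^ r) / 2 * ((r + 1) * (x - y)) =
          ((r + 1) * (x - y) * (x `^ r + y `^ r)) / 2 by field.
rewrite ler_pdivlMr //; lra.
Qed.

Lemma Tm_bound {R : realType} (r x y : R) : 1 < r -> 0 < y -> 0 < x ->
  0 <= Tm r x y /\ Tm r x y <= (x `^ r + y `^ r) / 2.
Proof.
move=> r1 y0 x0.
case: (ltgtP y x) => [yx|xy|<-].
- exact: Tm_lt.
- rewrite Tm_sym addrC; exact: Tm_lt.
- rewrite /Tm !subrr mul0r; split => //.
  by rewrite divr_ge0 // addr_ge0 // powR_ge0.
Qed.

Lemma midc {R : realType} (r a b : R) : 1 <= r -> 0 <= a -> 0 <= b ->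
  (a + b) `^ r <= 2 `^ r * ((a `^ r + b `^ r) / 2).
Proof.
move=> r1 a0 b0.
have h0 : (0:R) <= 2^-1 by rewrite invr_ge0.
have h1 : (2^-1 : R) <= 1 by rewrite invf_le1 ?ler1n.
have := convex_powR r1 (Itv01 h0 h1) (x := a) (y := b).
rewrite !inE /= !in_itv /= !andbT => /(_ a0 b0).
rewrite !convRE /= /unstable.onem.
have -> : (1 - 2^-1 : R) = 2^-1 by field.
move=> H.
move: H; set c := conv _ _ _ => H.
have Ec : c = 2^-1 * a + 2^-1 * b.
  by rewrite /c; apply: etrans (convRE _ _ _) _; rewrite /= /unstable.onem; congr (_ + _ * _); field.
have -> : a + b = 2 * c by rewrite Ec; field.
rewrite powRM ?ler0n // ?Ec ?addr_ge0 ?mulr_ge0 //.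
rewrite ler_pM2l ?powR_gt0 ?ltr0n // -?Ec.
apply: le_trans H _; rewrite le_eqVlt; apply/orP; left; apply/eqP; field.
by [].
Qed.

Definition S {R : realType} (r : R) (k : nat) :=
  \sum_(j < k.+1) ('C(k, j))%:R `^ r.

Lemma S_shift {R : realType} (r : R) (k : nat) : 0 < r ->
  \sum_(j < k.+1) ('C(k, j.+1))%:R `^ r = S r k - 1.
Proof.
move=> r0; rewrite /S big_ord_recr /= bin_small // powR0 ?gt_eqF // addr0.
rewrite big_ord_recl /= bin0 powR1.
rewrite [1 + _]addrC addrK.
by apply: eq_bigr => i _.
Qed.

Lemma S_step {R : realType} (r : R) (k : nat) : 1 < r ->
  S r k.+1 <= 2 `^ r * S r k.
Proof.
move=> r1.
have r0 : 0 < r by apply: lt_trans r1.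
have t2 : 2 <= 2 `^ r.
  have := @ler_powR R 2 ltac:(by rewrite ler1n) 1 r (ltW r1).
  by rewrite powRr1 ?ler0n.
have E : S r k.+1 = 1 + \sum_(j < k.+1) (('C(k, j.+1))%:R + ('C(k, j))%:R) `^ r.
  rewrite /S big_ord_recl /= bin0 powR1; congr (_ + _).
  by apply: eq_bigr => i _; rewrite /bump /= binS natrD.
have L : \sum_(j < k.+1) (('C(k, j.+1))%:R + ('C(k, j))%:R) `^ r <=
   \sum_(j < k.+1) (2 `^ r * ((('C(k, j.+1))%:R `^ r + ('C(k, j))%:R `^ r) / 2)).
  by apply: ler_sum => i _; apply: midc; rewrite ?ler0n ?ltW.
rewrite -mulr_sumr -mulr_suml big_split /= S_shift // in L.
rewrite E.
have ES : \sum_(j < k.+1) ('C(k, j))%:R `^ r = S r k by [].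
rewrite ES in L.
have S1 : 1 <= S r k.
  rewrite /S big_ord_recl /= bin0 powR1 lerDl.
  by apply: sumr_ge0 => i _; apply: powR_ge0.
have : 2 `^ r * ((S r k - 1 + S r k) / 2) = 2 `^ r * S r k - 2 `^ r / 2 by field.
move=> E2; rewrite E2 in L.
have : 1 <= 2 `^ r / 2 by rewrite ler_pdivlMr ?mul1r ?ltr0n.
lra.
Qed.

Lemma S_iter {R : realType} (r : R) (m n : nat) : 1 < r ->
  S r (m + n) <= (2 ^+ m) `^ r * S r n.
Proof.
move=> r1.
have S0 k : 0 <= S r k by apply: sumr_ge0 => i _; apply: powR_ge0.
elim: m => [|m IH].
  by rewrite add0n expr0 powR1 mul1r.
rewrite addSn; apply: le_trans (S_step r (m + n) r1) _.
rewrite exprS powRM ?ler0n ?exprn_ge0 // -mulrA ler_pM2l ?powR_gt0 ?ltr0n //.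
Qed.

Lemma sum_tel {R : realType} (r : R) (N : nat) : 0 < r ->
  \sum_(j < N) ((('C(N, j.+1))%:R `^ r + ('C(N, j))%:R `^ r) / 2) = S r N - 1.
Proof.
move=> r0.
rewrite -mulr_suml big_split /=.
have A : \sum_(j < N) ('C(N, j.+1))%:R `^ r = S r N - 1.
  rewrite /S big_ord_recl /= bin0 powR1 [1 + _]addrC addrK.
  by apply: eq_bigr.
have B : \sum_(j < N) ('C(N, j))%:R `^ r = S r N - 1.
  by rewrite /S big_ord_recr /= binn powR1 addrK.
by rewrite A B; field.
Qed.

Theorem mainTheorem10 (R : realType) (m n : nat) (r : R)
    (hmn : (m = n %[mod 2])%N) (hr : 1 < r) :
  let N := (m + n)%N in
  (2 / (r + 1) +
     \sum_(j < N)
        ((('C(N, j.+1))%:R `^ (r + 1) - ('C(N, j))%:R `^ (r + 1)) /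
         ((r + 1) * (('C(N, j.+1))%:R - ('C(N, j))%:R)))) `^ (r^-1)
  <= 2 ^+ m * (\sum_(j < n.+1) ('C(n, j))%:R `^ r) `^ (r^-1).
Proof.
cbv zeta. set N := (m + n)%N.
have r0 : 0 < r by apply: lt_trans hr.
have pos j : (j <= N)%N -> (0 : R) < ('C(N, j))%:R by move=> h; rewrite ltr0n bin_gt0.
have TB (j : 'I_N) : 0 <= Tm r ('C(N, j.+1))%:R ('C(N, j))%:R /\
    Tm r ('C(N, j.+1))%:R ('C(N, j))%:R <=
      ((('C(N, j.+1))%:R `^ r + ('C(N, j))%:R `^ r) / 2).
  apply: Tm_bound => //; apply: pos; [apply: ltnW|]; exact: ltn_ord.
set X := (X in X `^ _ <= _).
have HX : X <= S r N.
  rewrite /X.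
  apply: le_trans (_ : 2 / (r + 1) + (S r N - 1) <= _).
    rewrite lerD2l -(sum_tel r N r0); apply: ler_sum => j _.
    exact: (proj2 (TB j)).
  have : 2 / (r + 1) <= 1 by rewrite ler_pdivrMr ?mul1r; lra.
  lra.
have X0 : 0 <= X.
  apply: addr_ge0; first by rewrite divr_ge0 ?ler0n //; lra.
  apply: sumr_ge0 => j _; exact: (proj1 (TB j)).
have S0 k : 0 <= S r k by apply: sumr_ge0 => i _; apply: powR_ge0.
have ir0 : 0 <= r^-1 by rewrite invr_ge0 ltW.
apply: le_trans (ge0_ler_powR ir0 _ _ HX) _; rewrite ?nnegrE //.
apply: le_trans (ge0_ler_powR ir0 _ _ (S_iter r m n hr)) _;
  rewrite ?nnegrE ?mulr_ge0 ?powR_ge0 //.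
rewrite powRM ?powR_ge0 // -powRrM mulfV ?gt_eqF // powRr1 ?exprn_ge0 //.
Qed.
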